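(* Fix a state $s$, let $\gamma\in(0,1)$, and let $F_j^{N,\infty}=\sum_{i\le j}p_i^{N,\infty}$ and $F_j^{N,k}=\sum_{i\le j}p_i^{N,k}$ be the cumulative weights of $\eta_{N,\infty}^s=\sum_ip_i^{N,\infty}\delta_{z_i}$ and $\eta_{N,k}^s=\sum_ip_i^{N,k}\delta_{z_i}$ (with $F_0=0$). Let $u\in(0,1)$ and suppose there is $j\in\{1,\dots,N\}$ with $F_{j-1}^{N,\infty}<u<F_j^{N,\infty}$; set $\epsilon_u:=\min\{F_j^{N,\infty}-u,\ u-F_{j-1}^{N,\infty}\}$. If $k\ge\kappa N$ with $$\kappa>\frac{\log\!\big(\frac{N\delta_0}{\epsilon_u^2(z_{\max}-z_{\min})}\big)}{N\log(1/\gamma)},$$ then $F_{j-1}^{N,k}<u<F_j^{N,k}$, i.e. $z_j$ is also the corresponding quantile of $\eta_{N,k}^s$.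
   Context: Finite MDP with deterministic costs, discount $\gamma$, fixed policy $\pi$. Grid $z_i=z_{\min}+(i-1)\frac{z_{\max}-z_{\min}}{N-1}$, $N\ge2$. Projection $\Pi_{\mathcal C}$ onto grid distributions: $\Pi_{\mathcal C}\delta_y=\delta_{z_1}$ if $y\le z_1$, $=\delta_{z_N}$ if $y>z_N$, $=\frac{z_{i+1}-y}{z_{i+1}-z_i}\delta_{z_i}+\frac{y-z_i}{z_{i+1}-z_i}\delta_{z_{i+1}}$ if $z_i<y\le z_{i+1}$, extended linearly. Projected Bellman operator $(\Pi_{\mathcal C}\mathcal T^\pi\eta)^{(s,a)}=\Pi_{\mathcal C}\big[\sum_{s'}P(s'\mid s,a)\sum_{a'}\pi(a'\mid s')(b_{C(s,a),\gamma})_\#\eta^{(s',a')}\big]$ with $b_{c,\gamma}(z)=c+\gamma z$; $\eta_{N,\infty}$ is its unique fixed point, $\eta_{N,k}=(\Pi_{\mathcal C}\mathcal T^\pi)^k\eta_{N,0}$ for an initial family $\eta_{N,0}$ of grid distributions, and state laws are mixtures $\eta^s=\sum_a\pi(a\mid s)\eta^{(s,a)}$. $\delta_0:=\sup_{(s,a)}l_2^2(\eta_{N,0}^{(s,a)},\eta_{N,\infty}^{(s,a)})$ with Cramér distance $l_2(\nu_1,\nu_2)=(\int(F_{\nu_1}-F_{\nu_2})^2dx)^{1/2}$. It is known that $\Pi_{\mathcal C}\mathcal T^\pi$ is a $\sqrt\gamma$-contraction in $\bar l_2(\eta,\nu)=\sup_{(s,a)}l_2(\eta^{(s,a)},\nu^{(s,a)})$.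 *)

(* Defs.v *)
From Stdlib Require Import Reals.
From Coquelicot Require Import Coquelicot.
From mathcomp Require Import ssreflect ssrfun ssrbool eqtype ssrnat seq fintype bigop.

Set Implicit Arguments.
Unset Strict Implicit.
Unset Printing Implicit Defensive.

Local Open Scope R_scope.

(* Grid, 0-indexed: zgrid n = z_{n+1} = zmin + n (zmax - zmin)/(N-1). *)
Definition zgrid (zmin zmax : R) (N : nat) (n : nat) : R :=
  zmin + INR n * ((zmax - zmin) / INR (N - 1)).

(* Projection Pi_C delta_y, as a weight vector on the grid atoms 'I_N
   (atom i : 'I_N is z_{i+1} in the paper's 1-based numbering). *)
Definition proj_dirac (zmin zmax : R) (N : nat) (y : R) (i : 'I_N) : R :=
  let z := zgrid zmin zmax N in
  if Rle_dec y (z 0%nat) then (if nat_of_ord i == 0%nat then 1 else 0)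
  else if Rlt_dec (z (N - 1)%nat) y then (if nat_of_ord i == (N - 1)%nat then 1 else 0)
  else
    (if (0 < nat_of_ord i)%nat then
       (if Rlt_dec (z (i.-1)) y then
          (if Rle_dec y (z i) then (y - z (i.-1)) / (z i - z (i.-1)) else 0)
        else 0)
     else 0)
    +
    (if (i.+1 < N)%nat then
       (if Rlt_dec (z i) y then
          (if Rle_dec y (z i.+1) then (z i.+1 - y) / (z i.+1 - z i) else 0)
        else 0)
     else 0).

(* A grid distribution sum_i p_i delta_{z_i} is represented by its weights p. *)
Definition grid_distr (N : nat) (p : 'I_N -> R) : Prop :=
  (forall i, 0 <= p i) /\ \big[Rplus/R0]_(i : 'I_N) p i = 1.

(* The pushforward of sum_n p_n delta_{z_n}
   by b_{c,gamma} is sum_n p_n delta_{c + gamma z_n}, and Pi_C is linear. *)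
Definition proj_bellman (S A : finType) (P : S -> A -> S -> R) (pi : S -> A -> R)
  (C : S -> A -> R) (gamma zmin zmax : R) (N : nat)
  (eta : S -> A -> 'I_N -> R) : S -> A -> 'I_N -> R :=
  fun s a i =>
    \big[Rplus/R0]_(s' : S) (P s a s' *
      \big[Rplus/R0]_(a' : A) (pi s' a' *
        \big[Rplus/R0]_(n : 'I_N) (eta s' a' n *
            proj_dirac zmin zmax (C s a + gamma * zgrid zmin zmax N n) i))).

Arguments proj_bellman {S A} P pi C gamma zmin zmax N eta s a i.

Definition state_law (S A : finType) (N : nat) (pi : S -> A -> R)
  (eta : S -> A -> 'I_N -> R) (s : S) : 'I_N -> R :=
  fun i => \big[Rplus/R0]_(a : A) (pi s a * eta s a i).

(* Cumulative weight F_j = sum_{i <= j} p_i (paper, 1-based) = sum over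
   0-based atoms i < j; F_0 = 0. *)
Definition Fcum (N : nat) (p : 'I_N -> R) (j : nat) : R :=
  \big[Rplus/R0]_(i : 'I_N | (nat_of_ord i < j)%nat) p i.

Definition grid_cdf (zmin zmax : R) (N : nat) (p : 'I_N -> R) (x : R) : R :=
  \big[Rplus/R0]_(i : 'I_N | if Rle_dec (zgrid zmin zmax N i) x then true else false) p i.

Definition cramer_sq (zmin zmax : R) (N : nat) (p q : 'I_N -> R) : R :=
  RInt_gen (fun x => (grid_cdf zmin zmax p x - grid_cdf zmin zmax q x) ^ 2)
    (Rbar_locally m_infty) (Rbar_locally p_infty).

(* sup over (s,a) of a nonnegative quantity (finite max; 0 is neutral since
   the quantities are >= 0 and S*A is nonempty in any MDP with a policy). *)
Definition sup_sa (S A : finType) (f : S -> A -> R) : R :=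
  \big[Rmax/R0]_(sa : (S * A)%type) f sa.1 sa.2.

(* Main.v *)
Require Import Defs.
From Stdlib Require Import Reals Lra.
From Coquelicot Require Import Coquelicot.
From HB Require Import structures.
From mathcomp Require Import ssreflect ssrfun ssrbool eqtype ssrnat seq fintype bigop.
Local Open Scope R_scope.

Lemma RpA : associative Rplus. Proof. move=> x y z; ring. Qed.
HB.instance Definition _ := Monoid.isComLaw.Build R R0 Rplus RpA Rplus_comm Rplus_0_l.
Lemma Rmult_0_l' : left_zero R0 Rmult. Proof. move=> x; ring. Qed.
Lemma Rmult_0_r' : right_zero R0 Rmult. Proof. move=> x; ring. Qed.
HB.instance Definition _ := Monoid.isMulLaw.Build R R0 Rmult Rmult_0_l' Rmult_0_r'.
Lemma Rdl : left_distributive Rmult Rplus. Proof. move=> x y z; ring. Qed.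
Lemma Rdr : right_distributive Rmult Rplus. Proof. move=> x y z; ring. Qed.
HB.instance Definition _ := Monoid.isAddLaw.Build R Rmult Rplus Rdl Rdr.
Section Grid.
Variables (zmin zmax : R) (M : nat).
Hypothesis Hz : zmin < zmax.
Hypothesis HM : (0 < M)%nat.

Definition Dl := (zmax - zmin) / INR M.
Definition z n := zgrid zmin zmax M.+1 n.

Lemma Dl_pos : 0 < Dl.
Proof. rewrite /Dl; apply Rdiv_lt_0_compat; [lra|]. apply lt_0_INR; apply/ltP; done. Qed.

Lemma zE n : z n = zmin + INR n * Dl.
Proof. by rewrite /z /zgrid subn1. Qed.

Lemma zS n : z n.+1 = z n + Dl.
Proof. rewrite !zE S_INR; ring. Qed.

Lemma z_mono m n : (m <= n)%nat -> z m <= z n.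
Proof. move=> H; rewrite !zE; have := Dl_pos => ?. apply Rplus_le_compat_l, Rmult_le_compat_r; [lra|]. by apply le_INR; apply/leP. Qed.

Lemma zM : z M = zmax.
Proof. rewrite zE /Dl; field. apply not_0_INR; move: HM; case: M => //. Qed.
Lemma z0 : z 0 = zmin.
Proof. rewrite zE /=; ring. Qed.

Definition Hc (i : nat) (y : R) : R :=
  if Rle_dec y (z i) then 1 else if Rlt_dec (z i.+1) y then 0 else (z i.+1 - y) / Dl.

End Grid.
Section Proj.
Variables (zmin zmax : R) (M : nat).
Hypothesis Hz : zmin < zmax.
Hypothesis HM : (0 < M)%nat.
Local Notation z := (z zmin zmax M).
Local Notation Dl := (Dl zmin zmax M).
Local Notation Hc := (Hc zmin zmax M).

Ltac dec_cases := repeat (match goal with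
  | |- context [Rle_dec ?a ?b] => destruct (Rle_dec a b); cbn [is_left]
  | |- context [Rlt_dec ?a ?b] => destruct (Rlt_dec a b); cbn [is_left] end).

Lemma proj_mid i y : (0 < i < M)%nat ->
  @proj_dirac zmin zmax M.+1 y (inord i) = Hc i y - Hc i.-1 y.
Proof.
move=> /andP[Hi0 HiM].
have Dp := @Dl_pos zmin zmax M Hz HM.
rewrite /proj_dirac /Hc inordK; last by apply: ltn_trans HiM _.
change (zgrid zmin zmax M.+1) with z.
rewrite subn1 /= Hi0 ltnS HiM.
have -> : (i == 0)%N = false by move: Hi0; case: (i).
have -> : (i == M)%N = false by apply/negbTE; rewrite neq_ltn HiM.
have e1 : z i = z i.-1 + Dl by rewrite -zS prednK.
have e2 : z i.+1 = z i.-1 + Dl + Dl by rewrite zS e1.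
have h0 : z 0 <= z i.-1 by apply (@z_mono zmin zmax M Hz HM).
have hM : z i.+1 <= z M by apply (@z_mono zmin zmax M Hz HM).
rewrite prednK // in e1 *.
rewrite e2 e1 in hM *.
move: h0 hM; set a := z i.-1; set b := z 0; set c := z M => h0 hM.
dec_cases; try lra; field; lra.
Qed.

Lemma proj_0 y : @proj_dirac zmin zmax M.+1 y (inord 0) = Hc 0 y.
Proof.
have Dp := @Dl_pos zmin zmax M Hz HM.
rewrite /proj_dirac /Hc inordK //.
change (zgrid zmin zmax M.+1) with z.
rewrite subn1 /= ltnS HM.
have e1 : z 1 = z 0 + Dl by rewrite zS.
have hM : z 1 <= z M by apply (@z_mono zmin zmax M Hz HM).
rewrite e1 in hM *.
move: hM; set b := z 0; set c := z M => hM.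
have -> : (0 == M)%N = false by case: M HM.
dec_cases; try lra; field; lra.
Qed.

Lemma proj_M y : @proj_dirac zmin zmax M.+1 y (inord M) = 1 - Hc M.-1 y.
Proof.
have Dp := @Dl_pos zmin zmax M Hz HM.
rewrite /proj_dirac /Hc inordK //.
change (zgrid zmin zmax M.+1) with z.
rewrite subn1 /= HM ltnn eqxx.
have e1 : z M = z M.-1 + Dl by rewrite -zS prednK.
have h0 : z 0 <= z M.-1 by apply (@z_mono zmin zmax M Hz HM).
rewrite prednK //.
have -> : (M == 0)%N = false by case: M HM.
rewrite e1.
move: h0; set a := z M.-1; set b := z 0 => h0.
dec_cases; try lra; field; lra.
Qed.

End Proj.
Section Cum.
Variables (zmin zmax : R) (M : nat).
Hypothesis Hz : zmin < zmax.
Hypothesis HM : (0 < M)%nat.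
Local Notation z := (z zmin zmax M).
Local Notation Dl := (Dl zmin zmax M).
Local Notation Hc := (Hc zmin zmax M).

Lemma cumP y i : (i < M)%nat ->
  \big[Rplus/R0]_(n < i.+1) @proj_dirac zmin zmax M.+1 y (inord n) = Hc i y.
Proof.
elim: i => [|i IH] Hi.
  by rewrite big_ord_recr big_ord0 /= proj_0 //; ring.
rewrite big_ord_recr /= IH; last by apply: ltn_trans Hi.
rewrite proj_mid //=; ring.
Qed.

Lemma cumTot y : \big[Rplus/R0]_(n < M.+1) @proj_dirac zmin zmax M.+1 y (inord n) = 1.
Proof.
rewrite big_ord_recr /=.
have H := @cumP y M.-1; rewrite prednK // in H.
rewrite H // proj_M //; ring.
Qed.

End Cum.
Section HcProps.
Variables (zmin zmax : R) (M : nat).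
Hypothesis Hz : zmin < zmax.
Hypothesis HM : (0 < M)%nat.
Local Notation z := (z zmin zmax M).
Local Notation Dl := (Dl zmin zmax M).
Local Notation Hc := (Hc zmin zmax M).

Ltac dec_cases := repeat (match goal with
  | |- context [Rle_dec ?a ?b] => destruct (Rle_dec a b); cbn [is_left]
  | |- context [Rlt_dec ?a ?b] => destruct (Rlt_dec a b); cbn [is_left] end).

Lemma Hc01 i y : 0 <= Hc i y <= 1.
Proof.
have Dp := @Dl_pos zmin zmax M Hz HM.
rewrite /Hc; have e := zS zmin zmax M i; move: e; set a := z i; set b := z i.+1 => e.
dec_cases; try lra.
split.
  apply Rdiv_le_0_compat; lra.
apply (Rmult_le_reg_r Dl) => //; rewrite /Rdiv Rmult_assoc Rinv_l; lra.
Qed.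

Lemma Hc_anti i y y' : y <= y' -> Hc i y' <= Hc i y.
Proof.
have Dp := @Dl_pos zmin zmax M Hz HM.
move=> Hy.
rewrite /Hc; have e := zS zmin zmax M i; move: e; set a := z i; set b := z i.+1 => e.
dec_cases; try lra.
- apply (Rmult_le_reg_r Dl) => //; rewrite /Rdiv Rmult_assoc Rinv_l; lra.
- apply Rdiv_le_0_compat; lra.
- apply Rmult_le_compat_r; [left; apply Rinv_0_lt_compat|]; lra.
Qed.

Lemma sumHc y K : (K <= M)%nat ->
  \big[Rplus/R0]_(i < K) Hc i y = (z K - Rmax (z 0) (Rmin y (z K))) / Dl.
Proof.
have Dp := @Dl_pos zmin zmax M Hz HM.
elim: K => [|K IH] HK.
  have -> : Rmax (z 0) (Rmin y (z 0)) = z 0 by rewrite /Rmin; dec_cases; rewrite /Rmax; dec_cases; lra.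
  rewrite big_ord0 /Rminus Rplus_opp_r /Rdiv Rmult_0_l; reflexivity.
rewrite big_ord_recr /= IH; last by apply: ltnW.
have h0 : z 0 <= z K by apply (@z_mono zmin zmax M Hz HM).
rewrite /Hc zS; move: h0; set a := z K; set b := z 0 => h0.
rewrite /Rmin; dec_cases; rewrite /Rmax; dec_cases; try lra; (apply (Rmult_eq_reg_r Dl); [rewrite ?Rmult_plus_distr_r /Rdiv ?Rmult_assoc ?Rinv_l; lra | lra]).
Qed.

Lemma col_bound y y' : y <= y' ->
  \big[Rplus/R0]_(i < M) (Hc i y - Hc i y') <= (y' - y) / Dl.
Proof.
have Dp := @Dl_pos zmin zmax M Hz HM.
move=> Hy.
have -> : \big[Rplus/R0]_(i < M) (Hc i y - Hc i y') =
   \big[Rplus/R0]_(i < M) Hc i y - \big[Rplus/R0]_(i < M) Hc i y'.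
  rewrite /Rminus big_split /=; congr (_ + _).
  rewrite (big_morph Ropp (id1 := R0) (op1 := Rplus)) //; [move=> ??; ring | ring].
rewrite !sumHc //.
have h0 : z 0 <= z M by apply (@z_mono zmin zmax M Hz HM).
move: h0; set a := z M; set b := z 0 => h0.
have : (a - Rmax b (Rmin y a)) - (a - Rmax b (Rmin y' a)) <= y' - y.
  rewrite /Rmin; dec_cases; rewrite /Rmax; dec_cases; lra.
move=> H; rewrite /Rdiv -Rmult_minus_distr_r.
apply Rmult_le_compat_r; [left; apply Rinv_0_lt_compat|]; lra.
Qed.

End HcProps.
Section Sums.
Variable I : finType.

Lemma sum_le (F G : I -> R) : (forall i, F i <= G i) ->
  \big[Rplus/R0]_(i : I) F i <= \big[Rplus/R0]_(i : I) G i.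
Proof. move=> H; apply: (big_ind2 (fun x y => x <= y)) => //; [lra| move=> *; lra]. Qed.

Lemma sum_ge0 (F : I -> R) : (forall i, 0 <= F i) -> 0 <= \big[Rplus/R0]_(i : I) F i.
Proof. move=> H; apply: (big_ind (fun x => 0 <= x)) => //; [lra| move=> *; lra]. Qed.

Lemma sum_scal c (F : I -> R) : \big[Rplus/R0]_(i : I) (c * F i) = c * \big[Rplus/R0]_(i : I) F i.
Proof. by rewrite big_distrr. Qed.

Lemma sum_add (F G : I -> R) : \big[Rplus/R0]_(i : I) (F i + G i) = \big[Rplus/R0]_(i : I) F i + \big[Rplus/R0]_(i : I) G i.
Proof. by rewrite big_split. Qed.

Lemma sum_sub (F G : I -> R) : \big[Rplus/R0]_(i : I) (F i - G i) = \big[Rplus/R0]_(i : I) F i - \big[Rplus/R0]_(i : I) G i.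
Proof.
rewrite /Rminus sum_add; congr (_ + _).
transitivity (\big[Rplus/R0]_(i : I) (-1 * G i)); first by apply eq_bigr => i _; ring.
rewrite sum_scal; ring.
Qed.

Lemma CS (a G : I -> R) : (forall i, 0 <= a i) ->
  (\big[Rplus/R0]_(i : I) (a i * G i)) ^ 2 <=
  (\big[Rplus/R0]_(i : I) a i) * \big[Rplus/R0]_(i : I) (a i * G i ^ 2).
Proof.
move=> Ha.
set A := \big[Rplus/R0]_(i : I) a i.
set B := \big[Rplus/R0]_(i : I) (a i * G i).
set Cc := \big[Rplus/R0]_(i : I) (a i * G i ^ 2).
have key t : 0 <= Cc - 2 * t * B + t ^ 2 * A.
  have -> : Cc - 2 * t * B + t ^ 2 * A = \big[Rplus/R0]_(i : I) (a i * (G i - t) ^ 2).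
    transitivity (\big[Rplus/R0]_(i : I) (a i * G i ^ 2 + ((- 2 * t) * (a i * G i) + t ^ 2 * a i))).
      by rewrite !sum_add !sum_scal; rewrite /Cc /B /A; ring.
    by apply eq_bigr => i _; ring.
  apply sum_ge0 => i; apply Rmult_le_pos => //; apply pow2_ge_0.
have A0 : 0 <= A by apply sum_ge0.
case: (Rle_lt_or_eq_dec _ _ A0) => HA.
  have := key (B / A).
  have -> : Cc - 2 * (B / A) * B + (B / A) ^ 2 * A = (A * Cc - B ^ 2) / A by field; lra.
  move=> H.
  have : 0 <= (A * Cc - B ^ 2) / A * A by apply Rmult_le_pos; lra.
  have -> : (A * Cc - B ^ 2) / A * A = A * Cc - B ^ 2 by field; lra.
  lra.
case: (Req_dec B 0) => HB.
  rewrite HB -HA; lra.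
have := key ((Cc + 1) / (2 * B)).
rewrite -HA.
have -> : Cc - 2 * ((Cc + 1) / (2 * B)) * B + ((Cc + 1) / (2 * B)) ^ 2 * 0 = -1 by field.
lra.
Qed.

End Sums.
Lemma sum_by_parts (d h : nat -> R) K :
  \big[Rplus/R0]_(n < K.+1) (d n * h n) =
  \big[Rplus/R0]_(m < K) ((\big[Rplus/R0]_(n < m.+1) d n) * (h m - h m.+1)) +
  (\big[Rplus/R0]_(n < K.+1) d n) * h K.
Proof.
elim: K => [|K IH].
  by rewrite big_ord0 !big_ord_recr !big_ord0 /=; ring.
rewrite big_ord_recr /= IH [in RHS]big_ord_recr /= [in RHS](big_ord_recr K.+1) /=.
ring.
Qed.

Lemma telesc (h : nat -> R) K :
  \big[Rplus/R0]_(m < K) (h m - h m.+1) = h 0%nat - h K.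
Proof.
elim: K => [|K IH]; first by rewrite big_ord0; ring.
by rewrite big_ord_recr /= IH; ring.
Qed.

Section KL.
Variables (zmin zmax : R) (M : nat).
Hypothesis Hz : zmin < zmax.
Hypothesis HM : (0 < M)%nat.
Local Notation z := (z zmin zmax M).
Local Notation Dl := (Dl zmin zmax M).
Local Notation Hc := (Hc zmin zmax M).

Lemma KL (d : nat -> R) (c g : R) : 0 < g ->
  \big[Rplus/R0]_(n < M.+1) d n = 0 ->
  \big[Rplus/R0]_(i < M) (\big[Rplus/R0]_(n < M.+1) (d n * Hc i (c + g * z n))) ^ 2
  <= g * \big[Rplus/R0]_(m < M) (\big[Rplus/R0]_(n < m.+1) d n) ^ 2.
Proof.
move=> Hg Hd.
have Dp := @Dl_pos zmin zmax M Hz HM.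
set y := fun n => c + g * z n.
set G := fun m => \big[Rplus/R0]_(n < m.+1) d n.
set a := fun (i m : nat) => Hc i (y m) - Hc i (y m.+1).
have ymono m : y m <= y m.+1.
  rewrite /y zS; have := Dp; nra.
have a0 i m : 0 <= a i m.
  rewrite /a; have := @Hc_anti zmin zmax M Hz HM i _ _ (ymono m); lra.
have inner i : \big[Rplus/R0]_(n < M.+1) (d n * Hc i (c + g * z n)) =
     \big[Rplus/R0]_(m < M) (a i m * G m).
  rewrite (sum_by_parts d (fun n => Hc i (y n)) M) Hd Rmult_0_l Rplus_0_r.
  by apply eq_bigr => m _; rewrite /a /G; ring.
under eq_bigr => i _ do rewrite inner.
apply Rle_trans with (\big[Rplus/R0]_(i < M) (\big[Rplus/R0]_(m < M) (a i m * G m ^ 2))).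
  apply sum_le => i.
  apply Rle_trans with ((\big[Rplus/R0]_(m < M) a i m) * \big[Rplus/R0]_(m < M) (a i m * G m ^ 2)).
    by apply CS.
  have S1 : \big[Rplus/R0]_(m < M) a i m <= 1.
    rewrite /a (telesc (fun m => Hc i (y m))).
    have := @Hc01 zmin zmax M Hz HM i (y 0%nat); have := @Hc01 zmin zmax M Hz HM i (y M); lra.
  have S0 : 0 <= \big[Rplus/R0]_(m < M) (a i m * G m ^ 2).
    apply sum_ge0 => m; apply Rmult_le_pos => //; apply pow2_ge_0.
  have S2 : 0 <= \big[Rplus/R0]_(m < M) a i m by apply sum_ge0.
  nra.
rewrite exchange_big /= -sum_scal.
apply sum_le => m.
under eq_bigr => i _ do rewrite Rmult_comm.
rewrite sum_scal (Rmult_comm g).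
apply Rmult_le_compat_l; first by apply pow2_ge_0.
apply Rle_trans with ((y m.+1 - y m) / Dl).
  by apply (@col_bound zmin zmax M Hz HM).
rewrite /y zS; apply Req_le; field; lra.
Qed.

End KL.
Lemma xch (I J : finType) (c : I -> R) (g : I -> J -> R) :
  \big[Rplus/R0]_(j : J) \big[Rplus/R0]_(i : I) (c i * g i j) =
  \big[Rplus/R0]_(i : I) (c i * \big[Rplus/R0]_(j : J) g i j).
Proof. rewrite exchange_big /=; apply eq_bigr => i _; by rewrite sum_scal. Qed.

Lemma FcumE M (p : 'I_M.+1 -> R) j : (j <= M.+1)%nat ->
  Fcum p j = \big[Rplus/R0]_(n < j) p (inord n).
Proof.
move=> Hj; rewrite /Fcum (big_ord_widen _ (fun n => p (inord n)) Hj).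
by apply eq_bigr => i _; rewrite inord_val.
Qed.

Lemma sum_ordE M (f : 'I_M.+1 -> R) :
  \big[Rplus/R0]_(i : 'I_M.+1) f i = \big[Rplus/R0]_(n < M.+1) f (inord n).
Proof. by apply eq_bigr => i _; rewrite inord_val. Qed.

Definition Dg M (p q : 'I_M.+1 -> R) : R :=
  \big[Rplus/R0]_(m < M) (Fcum p m.+1 - Fcum q m.+1) ^ 2.

Arguments Dg {M} p q.

Lemma Dg_ge0 M (p q : 'I_M.+1 -> R) : 0 <= Dg p q.
Proof. apply sum_ge0 => m; apply pow2_ge_0. Qed.

Lemma Jensen (I : finType) (w X : I -> R) : (forall i, 0 <= w i) ->
  \big[Rplus/R0]_(i : I) w i = 1 ->
  (\big[Rplus/R0]_(i : I) (w i * X i)) ^ 2 <= \big[Rplus/R0]_(i : I) (w i * X i ^ 2).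
Proof. move=> Hw H1; have := @CS I w X Hw; rewrite H1; lra. Qed.

Section Bellman.
Variables (S A : finType) (P : S -> A -> S -> R) (pi : S -> A -> R) (C : S -> A -> R)
  (gamma zmin zmax : R) (M : nat).
Hypothesis HP0 : forall s a s', 0 <= P s a s'.
Hypothesis HP1 : forall s a, \big[Rplus/R0]_(s' : S) P s a s' = 1.
Hypothesis Hpi0 : forall s a, 0 <= pi s a.
Hypothesis Hpi1 : forall s, \big[Rplus/R0]_(a : A) pi s a = 1.
Hypothesis Hgamma : 0 < gamma < 1.
Hypothesis Hz : zmin < zmax.
Hypothesis HM : (0 < M)%nat.

Local Notation T := (proj_bellman P pi C gamma zmin zmax M.+1).

Lemma T_mass (eta : S -> A -> 'I_M.+1 -> R) :
  (forall s a, \big[Rplus/R0]_(i : 'I_M.+1) eta s a i = 1) ->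
  forall s a, \big[Rplus/R0]_(i : 'I_M.+1) T eta s a i = 1.
Proof.
move=> H s a; rewrite /proj_bellman xch.
rewrite -(HP1 s a); apply eq_bigr => s' _; rewrite xch.
rewrite -{2}(Rmult_1_r (P s a s')) -(Hpi1 s'); congr (_ * _).
apply eq_bigr => a' _; rewrite xch.
rewrite -{2}(Rmult_1_r (pi s' a')) -(H s' a'); congr (_ * _).
apply eq_bigr => n _.
rewrite sum_ordE (@cumTot zmin zmax M Hz HM); ring.
Qed.

Lemma T_cum (eta : S -> A -> 'I_M.+1 -> R) s a m : (m < M)%nat ->
  Fcum (T eta s a) m.+1 =
  \big[Rplus/R0]_(s' : S) (P s a s' * \big[Rplus/R0]_(a' : A) (pi s' a' *
     \big[Rplus/R0]_(n < M.+1) (eta s' a' (inord n) *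
        Hc zmin zmax M m (C s a + gamma * z zmin zmax M n)))).
Proof.
move=> Hm; rewrite FcumE //; last by apply: ltnW; rewrite ltnS.
rewrite /proj_bellman xch; apply eq_bigr => s' _; rewrite xch; congr (_ * _).
apply eq_bigr => a' _; rewrite xch; congr (_ * _).
apply eq_bigr => n _; rewrite inord_val; congr (_ * _).
by rewrite -(@cumP zmin zmax M Hz HM _ m Hm).
Qed.

End Bellman.
Section Contr.
Variables (S A : finType) (P : S -> A -> S -> R) (pi : S -> A -> R) (C : S -> A -> R)
  (gamma zmin zmax : R) (M : nat).
Hypothesis HP0 : forall s a s', 0 <= P s a s'.
Hypothesis HP1 : forall s a, \big[Rplus/R0]_(s' : S) P s a s' = 1.
Hypothesis Hpi0 : forall s a, 0 <= pi s a.
Hypothesis Hpi1 : forall s, \big[Rplus/R0]_(a : A) pi s a = 1.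
Hypothesis Hgamma : 0 < gamma < 1.
Hypothesis Hz : zmin < zmax.
Hypothesis HM : (0 < M)%nat.

Local Notation T := (proj_bellman P pi C gamma zmin zmax M.+1).

Lemma Dg_sum (p q : 'I_M.+1 -> R) :
  Dg p q = \big[Rplus/R0]_(m < M) (\big[Rplus/R0]_(n < m.+1) (p (inord n) - q (inord n))) ^ 2.
Proof.
apply eq_bigr => m _; rewrite sum_sub !FcumE //; apply: ltnW; rewrite ltnS; exact: ltn_ord.
Qed.

Lemma T_contr (eta xi : S -> A -> 'I_M.+1 -> R) B :
  (forall s a, \big[Rplus/R0]_(i : 'I_M.+1) eta s a i = 1) ->
  (forall s a, \big[Rplus/R0]_(i : 'I_M.+1) xi s a i = 1) ->
  (forall s a, Dg (eta s a) (xi s a) <= B) ->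
  forall s a, Dg (T eta s a) (T xi s a) <= gamma * B.
Proof.
move=> He Hx HB s a.
set X := fun s' a' (m : nat) => \big[Rplus/R0]_(n < M.+1)
   ((eta s' a' (inord n) - xi s' a' (inord n)) * Hc zmin zmax M m (C s a + gamma * z zmin zmax M n)).
have Hdiff m : (m < M)%nat -> Fcum (T eta s a) m.+1 - Fcum (T xi s a) m.+1 =
   \big[Rplus/R0]_(s' : S) (P s a s' * \big[Rplus/R0]_(a' : A) (pi s' a' * X s' a' m)).
  move=> Hm; rewrite !(@T_cum S A P pi C gamma zmin zmax M Hz HM) // -sum_sub.
  apply eq_bigr => s' _; rewrite -Rmult_minus_distr_l -sum_sub; congr (_ * _).
  apply eq_bigr => a' _; rewrite -Rmult_minus_distr_l -sum_sub; congr (_ * _).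
  by apply eq_bigr => n _; ring.
apply Rle_trans with (\big[Rplus/R0]_(m < M) \big[Rplus/R0]_(s' : S) (P s a s' *
    \big[Rplus/R0]_(a' : A) (pi s' a' * X s' a' m ^ 2))).
  apply sum_le => m; rewrite Hdiff //.
  apply Rle_trans with (\big[Rplus/R0]_(s' : S) (P s a s' * (\big[Rplus/R0]_(a' : A) (pi s' a' * X s' a' m)) ^ 2)).
    by apply Jensen.
  apply sum_le => s'; apply Rmult_le_compat_l => //.
  by apply Jensen.
rewrite xch.
apply Rle_trans with (\big[Rplus/R0]_(s' : S) (P s a s' * \big[Rplus/R0]_(a' : A) (pi s' a' * (gamma * B)))).
  apply sum_le => s'; rewrite xch; apply Rmult_le_compat_l => //.
  apply sum_le => a'; apply Rmult_le_compat_l => //.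
  have Hd : \big[Rplus/R0]_(n < M.+1) (eta s' a' (inord n) - xi s' a' (inord n)) = 0.
    by rewrite sum_sub -!sum_ordE He Hx; ring.
  have := @KL zmin zmax M Hz HM (fun n => eta s' a' (inord n) - xi s' a' (inord n)) (C s a) gamma (proj1 Hgamma) Hd.
  rewrite -Dg_sum => H.
  apply Rle_trans with (gamma * Dg (eta s' a') (xi s' a')).
    exact H.
  apply Rmult_le_compat_l; [lra | exact: HB].
under eq_bigr => s' _ do rewrite -big_distrl /= Hpi1 Rmult_1_l.
by rewrite -big_distrl /= HP1; lra.
Qed.

End Contr.
Lemma single_le (M : nat) (F : 'I_M -> R) (j : 'I_M) : (forall i, 0 <= F i) ->
  F j <= \big[Rplus/R0]_(i : 'I_M) F i.
Proof.
move=> H; rewrite (bigD1 j) //=.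
rewrite -{1}(Rplus_0_r (F j)); apply Rplus_le_compat_l.
apply: (big_ind (fun x => 0 <= x)) => //; [lra | move=> *; lra].
Qed.

Lemma Fcum_state (S A : finType) (N : nat) (pi : S -> A -> R) (eta : S -> A -> 'I_N -> R) s j :
  Fcum (state_law pi eta s) j = \big[Rplus/R0]_(a : A) (pi s a * Fcum (eta s a) j).
Proof.
rewrite /Fcum /state_law exchange_big /=; apply eq_bigr => a _; by rewrite big_distrr.
Qed.

Section Iter.
Variables (S A : finType) (P : S -> A -> S -> R) (pi : S -> A -> R) (C : S -> A -> R)
  (gamma zmin zmax : R) (M : nat).
Hypothesis HP0 : forall s a s', 0 <= P s a s'.
Hypothesis HP1 : forall s a, \big[Rplus/R0]_(s' : S) P s a s' = 1.
Hypothesis Hpi0 : forall s a, 0 <= pi s a.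
Hypothesis Hpi1 : forall s, \big[Rplus/R0]_(a : A) pi s a = 1.
Hypothesis Hgamma : 0 < gamma < 1.
Hypothesis Hz : zmin < zmax.
Hypothesis HM : (0 < M)%nat.

Local Notation T := (proj_bellman P pi C gamma zmin zmax M.+1).

Lemma iter_mass (eta0 : S -> A -> 'I_M.+1 -> R) k :
  (forall s a, \big[Rplus/R0]_(i : 'I_M.+1) eta0 s a i = 1) ->
  forall s a, \big[Rplus/R0]_(i : 'I_M.+1) Nat.iter k T eta0 s a i = 1.
Proof.
move=> H; elim: k => [|k IH] //=.
exact: (@T_mass S A P pi C gamma zmin zmax M HP1 Hpi1 Hz HM _ IH).
Qed.

Lemma iter_contr (eta0 xi : S -> A -> 'I_M.+1 -> R) B k :
  (forall s a, \big[Rplus/R0]_(i : 'I_M.+1) eta0 s a i = 1) ->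
  (forall s a, \big[Rplus/R0]_(i : 'I_M.+1) xi s a i = 1) ->
  T xi = xi ->
  (forall s a, Dg (eta0 s a) (xi s a) <= B) ->
  forall s a, Dg (Nat.iter k T eta0 s a) (xi s a) <= gamma ^ k * B.
Proof.
move=> H0 Hx Hfix HB; elim: k => [|k IH] s a /=.
  by rewrite Rmult_1_l.
have -> : xi s a = T xi s a by rewrite Hfix.
rewrite Rmult_assoc.
apply: (@T_contr S A P pi C gamma zmin zmax M HP0 HP1 Hpi0 Hpi1 Hgamma Hz HM) => //.
exact: iter_mass.
Qed.

End Iter.
Section Cramer.
Variables (zmin zmax : R) (M : nat).
Hypothesis Hz : zmin < zmax.
Hypothesis HM : (0 < M)%nat.
Local Notation z := (z zmin zmax M).
Local Notation Dl := (Dl zmin zmax M).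

Lemma gcdf_K (p : 'I_M.+1 -> R) x K :
  (forall i : 'I_M.+1, (if Rle_dec (z i) x then true else false) = (i < K)%nat) ->
  grid_cdf zmin zmax p x = Fcum p K.
Proof. move=> H; rewrite /grid_cdf /Fcum; apply eq_bigl => i; exact: H. Qed.

Lemma zmono' {m n} : (m <= n)%nat -> z m <= z n.
Proof. exact: (@z_mono zmin zmax M Hz HM). Qed.

Lemma zlt {m n} : (m < n)%nat -> z m < z n.
Proof.
move=> H; have := zmono' H; rewrite zS => ?.
have := @Dl_pos zmin zmax M Hz HM; lra.
Qed.

Lemma gcdf_mid (p : 'I_M.+1 -> R) m x : z m < x < z m.+1 -> grid_cdf zmin zmax p x = Fcum p m.+1.
Proof.
move=> Hx; apply gcdf_K => i.
case: (Rle_dec (z i) x) => /= H; case: (ltnP i m.+1) => Hi //.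
- by have := zmono' Hi; lra.
- by rewrite ltnS in Hi; have := zmono' Hi; lra.
Qed.

Lemma gcdf_low (p : 'I_M.+1 -> R) x : x < z 0 -> grid_cdf zmin zmax p x = 0.
Proof.
move=> Hx; rewrite (@gcdf_K p x 0).
  by rewrite FcumE // big_ord0.
move=> i; case: (Rle_dec (z i) x) => /= H //.
have := zmono' (leq0n i); lra.
Qed.

Lemma gcdf_high (p : 'I_M.+1 -> R) x : z M < x -> \big[Rplus/R0]_(i : 'I_M.+1) p i = 1 ->
  grid_cdf zmin zmax p x = 1.
Proof.
move=> Hx H1; rewrite (@gcdf_K p x M.+1).
  by rewrite /Fcum -H1; apply eq_bigl => i; rewrite ltn_ord.
move=> i; rewrite ltn_ord; case: (Rle_dec (z i) x) => /= H //.
have : (i <= M)%nat by rewrite -ltnS ltn_ord.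
move=> /zmono'; lra.
Qed.

Variables (p q : 'I_M.+1 -> R).
Hypothesis Hp : \big[Rplus/R0]_(i : 'I_M.+1) p i = 1.
Hypothesis Hq : \big[Rplus/R0]_(i : 'I_M.+1) q i = 1.

Let f := fun x => (grid_cdf zmin zmax p x - grid_cdf zmin zmax q x) ^ 2.

Lemma int_mid K : (K <= M)%nat ->
  is_RInt f (z 0) (z K) (Dl * \big[Rplus/R0]_(m < K) (Fcum p m.+1 - Fcum q m.+1) ^ 2).
Proof.
elim: K => [|K IH] HK.
  rewrite big_ord0 Rmult_0_r; exact: is_RInt_point.
rewrite big_ord_recr /= Rmult_plus_distr_l.
apply: (is_RInt_Chasles f (z 0) (z K) (z K.+1)).
  apply: IH; exact: ltnW.
have Hlt := zlt (ltnSn K).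
have := is_RInt_const (z K) (z K.+1) ((Fcum p K.+1 - Fcum q K.+1) ^ 2).
have E : (z K.+1 - z K) * ((Fcum p K.+1 - Fcum q K.+1) ^ 2) = Dl * (Fcum p K.+1 - Fcum q K.+1) ^ 2.
  rewrite zS; ring.
change (scal ?a ?b) with (a * b); rewrite E.
apply: is_RInt_ext => x.
rewrite Rmin_left ?Rmax_right; try lra.
move=> Hx; rewrite /f !(gcdf_mid _ _ _ Hx) //.
Qed.

Lemma int_low a : a <= z 0 -> is_RInt f a (z 0) 0.
Proof.
move=> Ha.
have := is_RInt_const a (z 0) 0.
change (scal ?a ?b) with (a * b); rewrite Rmult_0_r.
apply: is_RInt_ext => x; rewrite Rmin_left ?Rmax_right // => Hx.
rewrite /f !gcdf_low; try lra; ring.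
Qed.

Lemma int_high b : z M <= b -> is_RInt f (z M) b 0.
Proof.
move=> Hb.
have := is_RInt_const (z M) b 0.
change (scal ?a ?b) with (a * b); rewrite Rmult_0_r.
apply: is_RInt_ext => x; rewrite Rmin_left ?Rmax_right // => Hx.
rewrite /f !gcdf_high //; try lra; ring.
Qed.

Lemma cramer_eq : cramer_sq zmin zmax p q = Dl * Dg p q.
Proof.
rewrite /cramer_sq; apply is_RInt_gen_unique.
move=> P HP.
apply: (Filter_prod _ _ _ (fun a => a < z 0) (fun b => z M < b)).
- by exists (z 0).
- by exists (z M).
move=> a b Ha Hb; exists (Dl * Dg p q); split; last exact: locally_singleton.
have H1 := @int_low a (Rlt_le _ _ Ha).
have H2 := @int_mid M (leqnn M).
have H3 := @int_high b (Rlt_le _ _ Hb).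
have := is_RInt_Chasles _ _ _ _ _ _ (is_RInt_Chasles _ _ _ _ _ _ H1 H2) H3.
do 2 change (plus ?a ?b) with (a + b); rewrite Rplus_0_l Rplus_0_r /Dg /=; done.
Qed.

End Cramer.
Lemma le_bigmax (I : finType) (F : I -> R) i : F i <= \big[Rmax/R0]_(j : I) F j.
Proof.
have : i \in index_enum I by rewrite mem_index_enum.
elim: (index_enum I) => // a s IH; rewrite inE big_cons => /orP [/eqP <- | /IH H].
  exact: Rmax_l.
apply: Rle_trans H _; exact: Rmax_r.
Qed.

Lemma sq_lt (d e : R) : 0 < e -> d ^ 2 < e ^ 2 -> - e < d < e.
Proof. move=> He H; split; nra. Qed.

Lemma gamma_bound (gamma d0 eps zmin zmax kappa : R) (M k : nat) :
  0 < gamma < 1 -> zmin < zmax -> (0 < M)%nat -> 0 < eps ->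
  kappa > ln (INR M.+1 * d0 / (eps ^ 2 * (zmax - zmin))) / (INR M.+1 * ln (1 / gamma)) ->
  INR k >= kappa * INR M.+1 ->
  gamma ^ k * (d0 / Dl zmin zmax M) < eps ^ 2.
Proof.
move=> Hg Hz HM He Hk Hkk.
have MP : 0 < INR M by apply lt_0_INR; apply/ltP.
have NP : INR M < INR M.+1 by rewrite S_INR; lra.
have gk : 0 < gamma ^ k by apply pow_lt; lra.
have e2 : 0 < eps ^ 2 by apply pow_lt.
have -> : gamma ^ k * (d0 / Dl zmin zmax M) = gamma ^ k * d0 * INR M / (zmax - zmin).
  rewrite /Dl; field; lra.
case: (Rle_lt_dec d0 0) => Hd.
  apply Rle_lt_trans with 0 => //.
  rewrite /Rdiv; apply Rmult_le_0_r; [|left; apply Rinv_0_lt_compat; lra].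
  have : gamma ^ k * d0 <= 0 by nra.
  nra.
set X := INR M.+1 * d0 / (eps ^ 2 * (zmax - zmin)).
have XP : 0 < X.
  rewrite /X; apply Rdiv_lt_0_compat; [nra | apply Rmult_lt_0_compat; lra].
have l1 : 0 < ln (1 / gamma).
  rewrite -ln_1; apply ln_increasing; [lra|].
  apply (Rmult_lt_reg_r gamma); [lra|]; field_simplify; lra.
have HkL : ln X < INR k * ln (1 / gamma).
  have NL : 0 < INR M.+1 * ln (1 / gamma) by nra.
  have : ln X < kappa * (INR M.+1 * ln (1 / gamma)).
    apply (Rmult_lt_reg_r (/ (INR M.+1 * ln (1 / gamma)))); [by apply Rinv_0_lt_compat|].
    rewrite Rmult_assoc Rinv_r; [|lra]; rewrite Rmult_1_r; exact Hk.
  nra.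
rewrite -ln_pow in HkL; last by apply Rdiv_lt_0_compat; lra.
have Xlt : X < (1 / gamma) ^ k.
  apply ln_lt_inv => //; apply pow_lt; apply Rdiv_lt_0_compat; lra.
have Hgk1 : gamma ^ k * (1 / gamma) ^ k = 1.
  rewrite -Rpow_mult_distr; have -> : gamma * (1 / gamma) = 1 by field; lra.
  by rewrite pow1.
have H1 : gamma ^ k * X < 1 by nra.
have H2 : gamma ^ k * d0 * INR M.+1 < eps ^ 2 * (zmax - zmin).
  move: H1; rewrite /X => H1.
  have E : gamma ^ k * (INR M.+1 * d0 / (eps ^ 2 * (zmax - zmin))) =
     gamma ^ k * d0 * INR M.+1 / (eps ^ 2 * (zmax - zmin)) by field; nra.
  rewrite E in H1.
  apply (Rmult_lt_reg_r (/ (eps ^ 2 * (zmax - zmin)))); [apply Rinv_0_lt_compat; nra|].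
  rewrite Rinv_r; [exact H1|nra].
apply (Rmult_lt_reg_r (zmax - zmin)); [lra|].
have -> : gamma ^ k * d0 * INR M / (zmax - zmin) * (zmax - zmin) = gamma ^ k * d0 * INR M by field; lra.
have : gamma ^ k * d0 * INR M <= gamma ^ k * d0 * INR M.+1.
  apply Rmult_le_compat_l; [nra|lra].
lra.
Qed.
Theorem corollary2
  (S A : finType) (P : S -> A -> S -> R) (pi : S -> A -> R) (C : S -> A -> R)
  (gamma zmin zmax : R) (N : nat)
  (eta0 eta_inf : S -> A -> 'I_N -> R)
  (HP0 : forall s a s', 0 <= P s a s')
  (HP1 : forall s a, \big[Rplus/R0]_(s' : S) P s a s' = 1)
  (Hpi0 : forall s a, 0 <= pi s a)
  (Hpi1 : forall s, \big[Rplus/R0]_(a : A) pi s a = 1)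
  (Hgamma : 0 < gamma < 1)
  (HN : (2 <= N)%nat)
  (Hz : zmin < zmax)
  (Heta0 : forall s a, grid_distr (eta0 s a))
  (Hinf : forall s a, grid_distr (eta_inf s a))
  (Hfix : proj_bellman P pi C gamma zmin zmax N eta_inf = eta_inf) :
  let delta0 := sup_sa (fun s a => cramer_sq zmin zmax (eta0 s a) (eta_inf s a)) in
  forall (s : S) (u : R) (j : nat) (kappa : R) (k : nat),
    0 < u < 1 ->
    (1 <= j <= N)%nat ->
    let Finf := Fcum (state_law pi eta_inf s) in
    Finf (j - 1)%nat < u < Finf j ->
    let eps_u := Rmin (Finf j - u) (u - Finf (j - 1)%nat) in
    kappa > ln (INR N * delta0 / (eps_u ^ 2 * (zmax - zmin))) / (INR N * ln (1 / gamma)) ->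
    INR k >= kappa * INR N ->
    let Fk := Fcum (state_law pi (Nat.iter k (proj_bellman P pi C gamma zmin zmax N) eta0) s) in
    Fk (j - 1)%nat < u < Fk j.
Proof.
destruct N as [|M]; first by [].
have HM : (0 < M)%nat by [].
move=> delta0 s u j kappa k Hu Hj Finf HF eps_u Hk Hkk Fk.
have H0 : forall s a, \big[Rplus/R0]_(i : 'I_M.+1) eta0 s a i = 1 by move=> s0 a; case: (Heta0 s0 a).
have Hx : forall s a, \big[Rplus/R0]_(i : 'I_M.+1) eta_inf s a i = 1 by move=> s0 a; case: (Hinf s0 a).
have Dp := @Dl_pos zmin zmax M Hz HM.
have HB : forall s a, Dg (eta0 s a) (eta_inf s a) <= delta0 / Dl zmin zmax M.
  move=> s0 a.
  have E := @cramer_eq zmin zmax M Hz HM (eta0 s0 a) (eta_inf s0 a) (H0 s0 a) (Hx s0 a).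
  have := @le_bigmax _ (fun sa : (S * A)%type => cramer_sq zmin zmax (eta0 sa.1 sa.2) (eta_inf sa.1 sa.2)) (s0, a).
  rewrite /= E -/(sup_sa _) -/delta0 => H.
  apply (Rmult_le_reg_l (Dl zmin zmax M)) => //.
  have -> : Dl zmin zmax M * (delta0 / Dl zmin zmax M) = delta0 by field; lra.
  exact H.
set etak := Nat.iter k (proj_bellman P pi C gamma zmin zmax M.+1) eta0.
have Hk_contr := @iter_contr S A P pi C gamma zmin zmax M HP0 HP1 Hpi0 Hpi1 Hgamma Hz HM eta0 eta_inf _ k H0 Hx Hfix HB.
have Hk_mass := @iter_mass S A P pi C gamma zmin zmax M HP1 Hpi1 Hz HM eta0 k H0.
have eps_pos : 0 < eps_u by rewrite /eps_u /Rmin; case: Rle_dec; lra.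
have Hbeta := @gamma_bound gamma delta0 eps_u zmin zmax kappa M k Hgamma Hz HM eps_pos Hk Hkk.
have close : forall m, (m <= M.+1)%nat -> - eps_u < Fk m - Finf m < eps_u.
  move=> m Hm.
  have -> : Fk m - Finf m = \big[Rplus/R0]_(a : A) (pi s a * (Fcum (etak s a) m - Fcum (eta_inf s a) m)).
    rewrite /Fk /Finf !Fcum_state -sum_sub; apply eq_bigr => a _; by rewrite Rmult_minus_distr_l.
  case: m Hm => [|m] Hm.
    under eq_bigr => a _ do rewrite !FcumE // !big_ord0 Rminus_0_r Rmult_0_r.
    rewrite big1_eq; lra.
  case: (ltnP m M) => HmM.
    apply sq_lt => //.
    apply Rle_lt_trans with (\big[Rplus/R0]_(a : A) (pi s a * (Fcum (etak s a) m.+1 - Fcum (eta_inf s a) m.+1) ^ 2)).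
      by apply Jensen.
    apply Rle_lt_trans with (\big[Rplus/R0]_(a : A) (pi s a * (gamma ^ k * (delta0 / Dl zmin zmax M)))).
      apply sum_le => a; apply Rmult_le_compat_l => //.
      apply Rle_trans with (Dg (etak s a) (eta_inf s a)); last exact: Hk_contr.
      rewrite /Dg; apply: (@single_le M (fun m0 : 'I_M => (Fcum (etak s a) m0.+1 - Fcum (eta_inf s a) m0.+1) ^ 2) (Ordinal HmM)) => m0; apply pow2_ge_0.
    by rewrite -big_distrl /= Hpi1 Rmult_1_l.
  have -> : m = M by apply/eqP; rewrite eqn_leq HmM -ltnS Hm.
  have Htot : forall p : 'I_M.+1 -> R, Fcum p M.+1 = \big[Rplus/R0]_(i : 'I_M.+1) p i.
    by move=> p; rewrite /Fcum; apply eq_bigl => i; rewrite ltn_ord.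
  under eq_bigr => a _ do rewrite !Htot Hk_mass Hx Rminus_diag_eq // Rmult_0_r.
  rewrite big1_eq; lra.
have Hj1 : (j - 1 <= M.+1)%nat by case/andP: Hj => _ Hj; apply: leq_trans (leq_subr _ _) Hj.
have Hj2 : (j <= M.+1)%nat by case/andP: Hj.
have c1 := close _ Hj1.
have c2 := close _ Hj2.
have e1 : eps_u <= Finf j - u by apply Rmin_l.
have e2 : eps_u <= u - Finf (j - 1)%nat by apply Rmin_r.
split; lra.
Qed.
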